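(* Assume the following. (A1) $D$ is a real vector space; $M(\cdot,\cdot)$, $N(\cdot,\cdot)$ are symmetric bilinear forms on $D$, $M$ positive definite. (A2) There is a sequence $(\lambda_i,\varphi_i)_{i\in\mathbb N}\subset\mathbb R\times D$ with $\lambda_1\le\lambda_2\le\cdots$, $M(\varphi_i,v)=\lambda_iN(\varphi_i,v)$ for all $v\in D$, $M(\varphi_i,\varphi_j)=\delta_{ij}$, and $N(v,v)=\sum_{i=1}^\infty\lambda_i|N(v,\varphi_i)|^2$ for all $v\in D$. (A3) $X$ is a real vector space, $b_G$ a symmetric positive semidefinite bilinear form on $X$, and $T:D\to X$ linear with $b_G(Tu,Tv)=M(u,v)$ for all $u,v\in D$. (A4) $v_1,\dots,v_n\in D$ and $w_1,\dots,w_n\in X$ satisfy $b_G(w_i,Tv)=N(v_i,v)$ for all $v\in D$, $i=1,\dots,n$. (A5) $\rho>0$; with $A_0=(M(v_i,v_j))$, $A_1=(N(v_i,v_j))$, $A_2=(b_G(w_i,w_j))$, $A:=A_0-\rho A_1$, $B:=A_0-2\rho A_1+\rho^2A_2$, the matrix $B$ is positive definite; $\nu_1\le\cdots\le\nu_n$ are the eigenvalues of $Az=\nu Bz$ and $q$ is the number of negative ones. Suppose moreover $\rho\le\lambda_{m+1}$ for some integer $m\ge n$. Then $$\lambda_{m+1-k}\ \ge\ \rho-\frac{\rho}{1-\nu_k}\qquad(1\le k\le q).$$ In particular, if $A_1$ is positive definite and $\rho>\Lambda_n$, where $\Lambda_n$ is the largest eigenvalue of $A_0x=\Lambda A_1x$,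 then $\nu_n<0$, i.e. $q=n$, and the bound holds for all $1\le k\le n$. *)

(* Defs.v *)
From HB Require Import structures.
From mathcomp Require Import all_boot all_order all_algebra.
From mathcomp Require Import boolp classical_sets reals topology normedtype sequences.
Set Implicit Arguments.
Unset Strict Implicit.
Unset Printing Implicit Defensive.
Import Order.TTheory GRing.Theory Num.Theory numFieldNormedType.Exports.
Local Open Scope ring_scope.

(* symmetric bilinear form on an R-vector space V (symmetric + linear in the
   second argument, hence bilinear) *)
Definition sym_bilinear (R : realType) (V : lmodType R) (F : V -> V -> R) : Prop :=
  (forall u v, F u v = F v u) /\
  (forall (a : R) (u v w : V), F u (a *: v + w) = a * F u v + F u w).

Definition form_posdef (R : realType) (V : lmodType R) (F : V -> V -> R) : Prop :=
  forall v : V, v != 0 -> 0 < F v v.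

Definition form_possemidef (R : realType) (V : lmodType R) (F : V -> V -> R) : Prop :=
  forall v : V, 0 <= F v v.

Definition linear_map (R : realType) (U V : lmodType R) (T : U -> V) : Prop :=
  forall (a : R) (u w : U), T (a *: u + w) = a *: T u + T w.

Definition mx_posdef (R : realType) (n : nat) (B : 'M[R]_n) : Prop :=
  B^T = B /\ forall x : 'cV[R]_n, x != 0 -> 0 < (x^T *m B *m x) ord0 ord0.

Definition gram (R : realType) (V : Type) (n : nat) (F : V -> V -> R)
  (v : 'I_n -> V) : 'M[R]_n := \matrix_(i, j) F (v i) (v j).

(* nu : 'I_n -> R lists, nondecreasingly and with algebraic multiplicity,
   the eigenvalues of the generalized problem A z = nu B z (B invertible),
   i.e. the eigenvalues of B^{-1} A. *)
Definition gen_eigenvalues_sorted (R : realType) (n : nat) (A B : 'M[R]_n)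
  (nu : 'I_n -> R) : Prop :=
  char_poly (invmx B *m A) = \prod_(i < n) ('X - (nu i)%:P) /\
  (forall i j : 'I_n, (i <= j)%N -> nu i <= nu j).

(* Main.v *)
Require Import Defs.
From HB Require Import structures.
From mathcomp Require Import all_boot all_order all_algebra.
From mathcomp Require Import boolp classical_sets reals topology normedtype sequences.
From mathcomp Require Import ring lra zify.
Import Order.TTheory GRing.Theory Num.Theory numFieldNormedType.Exports.
Set Implicit Arguments.
Unset Strict Implicit.
Unset Printing Implicit Defensive.
Local Open Scope classical_set_scope.
Local Open Scope ring_scope.

Section LA.
Variable R : realFieldType.
Implicit Type n : nat.

Definition qf n (A : 'M[R]_n) (x y : 'rV[R]_n) : R := (x *m A *m y^T) ord0 ord0.

Lemma qf_sym n (A : 'M[R]_n) x y : A^T = A -> qf A x y = qf A y x.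
Proof.
move=> hA; rewrite /qf -[in LHS](trmxK (x *m A *m y^T)) mxE.
by rewrite !trmx_mul hA trmxK mulmxA.
Qed.

Lemma qf_linl n (A : 'M[R]_n) (a : R) x y z :
  qf A (a *: x + y) z = a * qf A x z + qf A y z.
Proof. by rewrite /qf mulmxDl mulmxDl -!scalemxAl !mxE. Qed.

Lemma qf_scalel n (A : 'M[R]_n) (a : R) x z : qf A (a *: x) z = a * qf A x z.
Proof. by rewrite /qf -!scalemxAl !mxE. Qed.

Lemma qf0l n (A : 'M[R]_n) z : qf A 0 z = 0.
Proof. by rewrite /qf !mul0mx mxE. Qed.

Definition pdr n (B : 'M[R]_n) := forall x : 'rV[R]_n, x != 0 -> 0 < qf B x x.

Lemma pdr_unit n (B : 'M[R]_n) : pdr B -> B \in unitmx.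
Proof.
move=> hB; rewrite -row_free_unit -kermx_eq0; apply/negPn/negP => hK.
set y := nz_row (kermx B).
have yn0 : y != 0 by rewrite nz_row_eq0.
have : (y <= kermx B)%MS by apply: nz_row_sub.
rewrite sub_kermx => /eqP hy.
by have := hB y yn0; rewrite /qf hy mul0mx mxE ltxx.
Qed.


Lemma char_poly_sim n (Q D : 'M[R]_n) : Q \in unitmx ->
  char_poly (invmx Q *m D *m Q) = char_poly D.
Proof.
move=> uQ; rewrite /char_poly.
have -> : char_poly_mx (invmx Q *m D *m Q) =
   map_mx polyC (invmx Q) *m char_poly_mx D *m map_mx polyC Q.
  rewrite /char_poly_mx mulmxBr mulmxBl !map_mxM; congr (_ - _).
  by rewrite -mulmxA -scalar_mxC mulmxA -map_mxM mulVmx // map_mx1 mul1mx.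
rewrite !det_mulmx mulrC mulrA -det_mulmx -map_mxM mulmxV //.
by rewrite map_mx1 det1 mul1r.
Qed.

Lemma eig_family n (A B : 'M[R]_n.+1) (nu : 'I_n.+1 -> R) :
  A^T = A -> B^T = B -> pdr B ->
  char_poly (invmx B *m A) = \prod_(i < n.+1) ('X - (nu i)%:P) ->
  forall k, (k <= n.+1)%N -> exists (e : nat -> 'rV[R]_n.+1) (mu : nat -> R),
   forall i, (i < k)%N -> [/\ e i != 0, e i *m A = mu i *: (e i *m B) &
      forall j, (j < k)%N -> j != i -> qf B (e i) (e j) = 0].
Proof.
move=> hA hB pB hchi; have uB := pdr_unit pB.
have hg : horner_mx (A *m invmx B) (\prod_(i < n.+1) ('X - (nu i)%:P)) = 0.
  rewrite -hchi -(@char_poly_sim _ (invmx B)) ?unitmx_inv // invmxK.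
  have -> : B *m (invmx B *m A) *m invmx B = A *m invmx B.
    by rewrite mulmxA mulmxV // mul1mx.
  exact: Cayley_Hamilton.
have hg2 : \prod_(0 <= i < n.+1) (A *m invmx B - (nu (inord i))%:M) = 0.
  rewrite -hg rmorph_prod big_mkord; apply: eq_bigr => i _.
  by rewrite rmorphB /= horner_mx_X horner_mx_C inord_val.
elim=> [|k IH] hk.
  by exists (fun _ => 0), (fun _ => 0) => i.
have [e [mu he]] := IH (ltnW hk).
pose E : 'M[R]_(k, n.+1) := \matrix_(c < k) e c.
pose K := B *m E^T.
have hK : forall (x : 'rV_n.+1) (c : 'I_k), (x *m K) ord0 c = qf B x (e c).
  move=> x c; rewrite /K /qf mulmxA [LHS]mxE [RHS]mxE.
  by apply: eq_bigr => l _; rewrite !mxE.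
have stab : forall y : 'rV[R]_n.+1, y *m K = 0 -> y *m (A *m invmx B) *m K = 0.
  move=> y hy; apply/rowP => c; rewrite [RHS]mxE hK.
  have -> : qf B (y *m (A *m invmx B)) (e c) = qf A y (e c).
    by rewrite /qf !mulmxA mulmxKV.
  have [_ h2 _] := he c (ltn_ord c).
  rewrite qf_sym // /qf h2 -scalemxAl mxE.
  rewrite -/(qf B (e c) y) qf_sym // -hK hy mxE mulr0 //.
have : (0 < \rank (kermx K))%N.
  by rewrite mxrank_ker subn_gt0; apply: leq_ltn_trans (rank_leq_col K) hk.
rewrite lt0n mxrank_eq0 => hK0.
set x := nz_row (kermx K).
have xn0 : x != 0 by rewrite nz_row_eq0.
have hxK : x *m K = 0 by apply/eqP; rewrite -sub_kermx nz_row_sub.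
pose Y j := x *m \prod_(0 <= i < j) (A *m invmx B - (nu (inord i))%:M).
have hY0 : Y 0%N = x by rewrite /Y big_geq // mulmx1.
have hYS : forall j, Y j.+1 = Y j *m (A *m invmx B - (nu (inord j))%:M).
  by move=> j; rewrite /Y big_nat_recr //= mulmxA.
have hYK : forall j, Y j *m K = 0.
  elim=> [|j ihj]; first by rewrite hY0.
  by rewrite hYS mulmxBr mulmxBl mul_mx_scalar -scalemxAl ihj stab // scaler0 subr0.
have hYn : Y n.+1 = 0 by rewrite /Y hg2 mulmx0.
have hex : exists j, Y j == 0 by exists n.+1; rewrite hYn.
case: (ex_minnP hex) => j0 hj0 hmin.
case: j0 hj0 hmin => [|j] hj0 hmin.
  by move: hj0; rewrite hY0 (negbTE xn0).
have hYj : Y j != 0.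
  by apply/negP => h; have := hmin _ h; rewrite ltnn.
set c := nu (inord j).
have hev : Y j *m (A *m invmx B) = c *: Y j.
  by move: hj0; rewrite hYS mulmxBr mul_mx_scalar subr_eq0 => /eqP.
have heA : Y j *m A = c *: (Y j *m B).
  by rewrite -(mulmxKV uB (Y j *m A)) -(mulmxA (Y j) A) hev -scalemxAl.
exists (fun i => if i == k then Y j else e i), (fun i => if i == k then c else mu i).
move=> i hi; case: (eqVneq i k) => [->|nik].
  split => // j' hj' nj'; rewrite (negbTE nj').
  have hj'k : (j' < k)%N by rewrite ltn_neqAle nj' -ltnS.
  by have := hK (Y j) (Ordinal hj'k); rewrite hYK mxE /= => <-.
have hik : (i < k)%N by rewrite ltn_neqAle nik -ltnS.
have [h1 h2 h3] := he i hik; split => // j' hj' nj'.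
case: (eqVneq j' k) => [_|njk].
  by rewrite qf_sym // -(hK (Y j) (Ordinal hik)) hYK mxE.
by apply: h3 => //; rewrite ltn_neqAle njk -ltnS.
Qed.


Lemma eig_basis n (A B : 'M[R]_n.+1) (nu : 'I_n.+1 -> R) :
  A^T = A -> B^T = B -> pdr B ->
  char_poly (invmx B *m A) = \prod_(i < n.+1) ('X - (nu i)%:P) ->
  exists (P : 'M[R]_n.+1) (mu d : 'I_n.+1 -> R),
  [/\ P \in unitmx, P *m A = diag_mx (\row_i mu i) *m (P *m B),
      P *m B *m P^T = diag_mx (\row_i d i), (forall i, 0 < d i) &
      char_poly (invmx B *m A) = \prod_(i < n.+1) ('X - (mu i)%:P)].
Proof.
move=> hA hB pB hchi; have uB := pdr_unit pB.
have [e [mu he]] := eig_family hA hB pB hchi (leqnn n.+1).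
pose P : 'M[R]_n.+1 := \matrix_(i < n.+1) e i.
have hP : forall (M : 'M[R]_n.+1) i j, (P *m M) i j = (e i *m M) ord0 j.
  by move=> M i j; rewrite !mxE; apply: eq_bigr => l _; rewrite !mxE.
exists P, (fun i => mu i), (fun i => qf B (e i) (e i)).
have hPA : P *m A = diag_mx (\row_i mu i) *m (P *m B).
  apply/matrixP => i j; rewrite mul_diag_mx [RHS]mxE !hP.
  by have [_ -> _] := he i (ltn_ord i); rewrite !mxE.
have hPB : P *m B *m P^T = diag_mx (\row_i qf B (e i) (e i)).
  apply/matrixP => i j.
  have -> : (P *m B *m P^T) i j = qf B (e i) (e j).
    by rewrite [LHS]mxE /qf [RHS]mxE; apply: eq_bigr => l _; rewrite hP !mxE.
  rewrite !mxE; case: (eqVneq i j) => [->|nij]; first by rewrite mulr1n.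
  have [_ _ h3] := he i (ltn_ord i); rewrite mulr0n h3 //.
  by apply/negP => /eqP /val_inj h; rewrite h eqxx in nij.
have dpos : forall i : 'I_n.+1, 0 < qf B (e i) (e i).
  by move=> i; apply: pB; have [-> _ _] := he i (ltn_ord i).
have uP : P \in unitmx.
  have : P *m B *m P^T \in unitmx.
    rewrite hPB unitmxE det_diag unitfE prodf_seq_neq0.
    by apply/allP => i _; apply/implyP => _; rewrite mxE gt_eqF.
  by rewrite !unitmx_mul => /andP [/andP [-> _] _].
split => //.
have -> : invmx B *m A = invmx (P *m B) *m diag_mx (\row_i mu i) *m (P *m B).
  have hPA' : P *m A = (P *m B) *m (invmx B *m A) by rewrite mulmxA mulmxK.
  by rewrite -mulmxA -hPA hPA' mulKmx // unitmx_mul uP uB.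
rewrite char_poly_sim ?unitmx_mul ?uP ?uB // char_poly_trig ?diag_mx_is_trig //.
by apply: eq_bigr => i _; rewrite !mxE eqxx mulr1n.
Qed.


Lemma count_le n (mu nu : 'I_n -> R) (a : R) :
  \prod_(i < n) ('X - (mu i)%:P) = \prod_(i < n) ('X - (nu i)%:P) ->
  #|[pred i | (mu i <= a)%R]| = #|[pred i | nu i <= a]|.
Proof.
move=> h.
have hp : perm_eq (map mu (enum 'I_n)) (map nu (enum 'I_n)).
  apply: prod_XsubC_eq; rewrite !big_map; exact: h.
move/permP: hp => /(_ (fun x => x <= a)); rewrite !count_map.
by rewrite !cardE /enum_mem !size_filter -!enumT.
Qed.

Lemma rank_sum_le (I : finType) (P : pred I) n (B_ : I -> 'M[R]_n) :
  (\rank (\sum_(i | P i) B_ i)%MS <= \sum_(i | P i) \rank (B_ i))%N.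
Proof.
apply: (big_rec2 (fun (X : 'M[R]_n) (s : nat) => \rank X <= s)%N).
  by rewrite mxrank0.
move=> i X s _ hX; apply: leq_trans (mxrank_adds_leqif _ _).1 _.
by rewrite leq_add2l.
Qed.

Lemma rank_diag_le n (w : 'rV[R]_n) :
  (\rank (diag_mx w) <= #|[pred i | w ord0 i != 0%R]|)%N.
Proof.
have hsub : (diag_mx w <= \sum_(i | w ord0 i != 0) (delta_mx i i : 'M[R]_n))%MS.
  apply/row_subP => i; rewrite row_diag_mx.
  case: (eqVneq (w ord0 i) (0:R)) => [->|hi]; first by rewrite scale0r sub0mx.
  apply: scalemx_sub; apply: (sumsmx_sup i) => //.
  by have := submxMl (delta_mx 0 i : 'M[R]_(1,n)) (delta_mx i i : 'M[R]_n); rewrite mul_delta_mx.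
apply: leq_trans (mxrankS hsub) _.
apply: leq_trans (rank_sum_le _ _) _.
by rewrite (eq_bigr (fun _ => 1%N)) ?sum1_card // => i _; rewrite mxrank_delta.
Qed.


Lemma qf_mulP n (M P : 'M[R]_n) (c : 'rV[R]_n) :
  qf M (c *m P) (c *m P) = qf (P *m M *m P^T) c c.
Proof. by rewrite /qf trmx_mul !mulmxA. Qed.

Lemma qf_diag n (w : 'rV[R]_n) c :
  qf (diag_mx w) c c = \sum_i c ord0 i ^+ 2 * w ord0 i.
Proof.
rewrite /qf mul_mx_diag mxE; apply: eq_bigr => i _; rewrite !mxE.
by rewrite expr2 mulrAC.
Qed.

Lemma mul_diag2 n (u w : 'rV[R]_n) :
  diag_mx u *m diag_mx w = diag_mx (\row_i (u ord0 i * w ord0 i)).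
Proof. by apply/matrixP => i j; rewrite mul_diag_mx !mxE mulrnAr. Qed.

Lemma card_ord_lt n j : (j <= n)%N -> #|[pred i : 'I_n | (i < j)%N]| = j.
Proof.
move=> hj; rewrite -sum1_card.
rewrite (eq_bigl (fun i : 'I_n => predT i && (i < j)%N)) //.
by rewrite (big_ord_narrow_cond hj) sum1_card card_ord.
Qed.

Lemma LA1 n (A B : 'M[R]_n.+1) (nu : 'I_n.+1 -> R) (k0 : 'I_n.+1) m'
  (L : 'M[R]_(n.+1, m')) :
  A^T = A -> B^T = B -> pdr B ->
  char_poly (invmx B *m A) = \prod_(i < n.+1) ('X - (nu i)%:P) ->
  (forall i j : 'I_n.+1, (i <= j)%N -> nu i <= nu j) ->
  (m' <= k0)%N ->
  exists x : 'rV[R]_n.+1, [/\ x != 0, x *m L = 0 & qf A x x <= nu k0 * qf B x x].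
Proof.
move=> hA hB pB hchi hmono hm'.
have [P [mu [d [uP hPA hPB dpos hchi2]]]] := eig_basis hA hB pB hchi.
set a := nu k0.
pose dl := \row_i (if mu i <= a then 0 else 1 : R).
pose X1 := kermx (P *m L).
pose X2 := kermx (diag_mx dl).
have h1 : (\rank (P *m L) <= m')%N by apply: rank_leq_col.
have h2 : (\rank (diag_mx dl) <= #|[pred i | ~~ (mu i <= a)%R]|)%N.
  apply: leq_trans (rank_diag_le _) _; apply: subset_leq_card.
  by apply/fintype.subsetP => i; rewrite !inE mxE; case: (mu i <= a); rewrite ?eqxx.
have h3 : (#|[pred i | (mu i <= a)%R]| + #|[pred i | ~~ (mu i <= a)%R]|)%N = n.+1.
  rewrite -[RHS](card_ord n.+1) -(cardC [pred i | (mu i <= a)%R]); congr (_ + _)%N.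
have h4 : (k0.+1 <= #|[pred i | (mu i <= a)%R]|)%N.
  rewrite (count_le a (etrans (esym hchi2) hchi)) -(card_ord_lt (ltn_ord k0)).
  by apply: subset_leq_card; apply/fintype.subsetP => i; rewrite !inE => hi; apply: hmono.
have h5 := mxrank_sum_cap X1 X2.
have h6 : (\rank (X1 + X2)%MS <= n.+1)%N by apply: rank_leq_col.
have h7 := mxrank_ker (P *m L).
have h8 := mxrank_ker (diag_mx dl).
have hcap : (0 < \rank (X1 :&: X2)%MS)%N.
  rewrite /X1 /X2 in h5 h6 *; lia.
move: hcap; rewrite lt0n mxrank_eq0 => hcap.
set c := nz_row (X1 :&: X2)%MS.
have cn0 : c != 0 by rewrite nz_row_eq0.
have hc1 : c *m (P *m L) = 0.
  apply/eqP; rewrite -sub_kermx; apply: submx_trans (nz_row_sub _) _.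
  exact: capmxSl.
have hc2 : c *m diag_mx dl = 0.
  apply/eqP; rewrite -sub_kermx; apply: submx_trans (nz_row_sub _) _.
  exact: capmxSr.
exists (c *m P); split.
- apply/negP => /eqP h; move/negP: cn0; apply; apply/eqP.
  by rewrite -(mulmxK uP c) h mul0mx.
- by rewrite -mulmxA hc1.
rewrite !qf_mulP.
have -> : P *m A *m P^T = diag_mx (\row_i (mu i * d i)).
  rewrite hPA -!mulmxA (mulmxA P B) hPB mul_diag2.
  by congr diag_mx; apply/rowP => i; rewrite !mxE.
rewrite hPB !qf_diag mulr_sumr; apply: ler_sum => i _; rewrite !mxE.
case: (boolP (mu i <= a)) => hi.
  have := dpos i; have : 0 <= c ord0 i ^+ 2 by apply: sqr_ge0.
  move=> h0 hd; have hi2 : 0 <= a - mu i by rewrite subr_ge0.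
  have h := mulr_ge0 (mulr_ge0 h0 (ltW hd)) hi2; nra.
have : (c *m diag_mx dl) ord0 i = 0 by rewrite hc2 mxE.
rewrite mul_mx_diag mxE mxE (negbTE hi) mulr1 => ->.
by rewrite expr2 !mul0r mulr0.
Qed.


Lemma qf_matB n (M N : 'M[R]_n) (r : R) x :
  qf (M - r *: N) x x = qf M x x - r * qf N x x.
Proof. by rewrite /qf mulmxBr mulmxBl -scalemxAr -scalemxAl !mxE. Qed.

Lemma root_prodXsubC n (nu : 'I_n -> R) i :
  root (\prod_(j < n) ('X - (nu j)%:P)) (nu i).
Proof.
by rewrite /root horner_prod (bigD1 i) //= !hornerE subrr mul0r.
Qed.

Lemma LA2 n (A0 A1 : 'M[R]_n.+1) (Lam : 'I_n.+1 -> R) (rho : R) :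
  A0^T = A0 -> A1^T = A1 -> pdr A1 ->
  char_poly (invmx A1 *m A0) = \prod_(i < n.+1) ('X - (Lam i)%:P) ->
  (forall i, Lam i < rho) ->
  forall x : 'rV[R]_n.+1, x != 0 -> qf (A0 - rho *: A1) x x < 0.
Proof.
move=> hA0 hA1 pA1 hchi hL x xn0.
have [P [mu [d [uP hPA hPB dpos hchi2]]]] := eig_basis hA0 hA1 pA1 hchi.
have hmu : forall i, mu i < rho.
  move=> i; have := root_prodXsubC mu i.
  rewrite -hchi2 hchi /root horner_prod => /prodf_eq0 [j _].
  rewrite !hornerE subr_eq0 => /eqP ->; exact: hL.
have hx := mulmxKV uP x; move: (x *m invmx P) hx => c hx; symmetry in hx.
have cn0 : c != 0.
  apply/negP => /eqP h; move/negP: xn0; apply; apply/eqP.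
  by rewrite hx h mul0mx.
have [i0 hi0] : exists i, c ord0 i != 0.
  apply/existsP; apply: contraNT cn0 => /existsPn h; apply/eqP/rowP => i.
  by rewrite [RHS]mxE; apply/eqP; exact: negbNE (h i).
rewrite qf_matB hx !qf_mulP.
have -> : P *m A0 *m P^T = diag_mx (\row_i (mu i * d i)).
  rewrite hPA -!mulmxA (mulmxA P A1) hPB mul_diag2.
  by congr diag_mx; apply/rowP => i; rewrite !mxE.
rewrite hPB !qf_diag.
have e1 : \sum_i c ord0 i ^+ 2 * (\row_i (mu i * d i)) ord0 i =
          \sum_i c ord0 i ^+ 2 * (mu i * d i) by apply: eq_bigr => i _; rewrite mxE.
have e2 : \sum_i c ord0 i ^+ 2 * (\row_i d i) ord0 i =
          \sum_i c ord0 i ^+ 2 * d i by apply: eq_bigr => i _; rewrite mxE.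
rewrite e1 e2 mulr_sumr -sumrB (bigD1 i0) //=.
have h1 : 0 <= \sum_(i | i != i0) - (c ord0 i ^+ 2 * (mu i * d i) -
                  rho * (c ord0 i ^+ 2 * d i)).
  apply: sumr_ge0 => i _.
  have := dpos i; have := hmu i; have : 0 <= c ord0 i ^+ 2 by apply: sqr_ge0.
  move=> h0 hm hd; have h := mulr_ge0 h0 (ltW hd); nra.
rewrite sumrN in h1.
have : 0 < c ord0 i0 ^+ 2 by rewrite exprn_even_gt0 //= hi0 orbT.
have := dpos i0; have := hmu i0; move=> hm hd h0.
have h := mulr_gt0 h0 hd; nra.
Qed.

Lemma LA3 n (A B : 'M[R]_n) (nu : 'I_n -> R) :
  B^T = B -> pdr B ->
  (forall x : 'rV[R]_n, x != 0 -> qf A x x < 0) ->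
  char_poly (invmx B *m A) = \prod_(i < n) ('X - (nu i)%:P) ->
  forall i, nu i < 0.
Proof.
move=> hB pB hA hchi i; have uB := pdr_unit pB.
have : eigenvalue (invmx B *m A) (nu i).
  by rewrite eigenvalue_root_char hchi root_prodXsubC.
move=> /eigenvalueP [v hv vn0].
set z := v *m invmx B.
have hzB : z *m B = v by rewrite /z mulmxKV.
have zn0 : z != 0.
  by apply/negP => /eqP h; move/negP: vn0; apply; rewrite -hzB h mul0mx.
have hzA : z *m A = nu i *: (z *m B) by rewrite hzB /z -mulmxA hv.
have hq : qf A z z = nu i * qf B z z by rewrite /qf hzA -scalemxAl mxE.
have := hA z zn0; have := pB z zn0; rewrite hq => hb ha; nra.
Qed.


Lemma qf_addM n (P Q : 'M[R]_n) x : qf (P + Q) x x = qf P x x + qf Q x x.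
Proof. by rewrite /qf mulmxDr mulmxDl mxE. Qed.

Lemma qf_subM n (P Q : 'M[R]_n) x : qf (P - Q) x x = qf P x x - qf Q x x.
Proof. by rewrite /qf mulmxBr mulmxBl !mxE. Qed.

Lemma qf_scaleM n (P : 'M[R]_n) r x : qf (r *: P) x x = r * qf P x x.
Proof. by rewrite /qf -scalemxAr -scalemxAl mxE. Qed.

End LA.

Section BL.
Variables (R : realType) (V : lmodType R) (F : V -> V -> R).
Hypothesis hF : sym_bilinear F.

Lemma blr0 u : F u 0 = 0.
Proof.
have := hF.2 (-1) u u u; rewrite scaleN1r addNr mulN1r addNr //.
Qed.

Lemma blrD u v w : F u (v + w) = F u v + F u w.
Proof. by have := hF.2 1 u v w; rewrite scale1r mul1r. Qed.

Lemma blrZ u a v : F u (a *: v) = a * F u v.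
Proof. by have := hF.2 a u v 0; rewrite addr0 blr0 addr0. Qed.

Lemma blrN u v : F u (- v) = - F u v.
Proof. by rewrite -scaleN1r blrZ mulN1r. Qed.

Lemma blrB u v w : F u (v - w) = F u v - F u w.
Proof. by rewrite blrD blrN. Qed.

Lemma bllD u v w : F (v + w) u = F v u + F w u.
Proof. by rewrite hF.1 blrD !(hF.1 u). Qed.

Lemma bllZ u a v : F (a *: v) u = a * F v u.
Proof. by rewrite hF.1 blrZ (hF.1 u). Qed.

Lemma bllB u v w : F (v - w) u = F v u - F w u.
Proof. by rewrite hF.1 blrB !(hF.1 u). Qed.

Lemma blr_sum (I : Type) (r : seq I) (P : pred I) (f : I -> V) u :
  F u (\sum_(i <- r | P i) f i) = \sum_(i <- r | P i) F u (f i).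
Proof. exact: (big_morph (F u) (blrD u) (blr0 u)). Qed.

Lemma bll_sum (I : Type) (r : seq I) (P : pred I) (f : I -> V) u :
  F (\sum_(i <- r | P i) f i) u = \sum_(i <- r | P i) F (f i) u.
Proof. by rewrite hF.1 blr_sum; apply: eq_bigr => i _; rewrite hF.1. Qed.

Lemma bessel (e : nat -> V) y J : form_possemidef F ->
  (forall i j, F (e i) (e j) = (i == j)%:R) ->
  \sum_(j < J) (F y (e j)) ^+ 2 <= F y y.
Proof.
move=> hpsd horth.
pose S := \sum_(j < J) F y (e j) *: e j.
have hyS : F y S = \sum_(j < J) (F y (e j)) ^+ 2.
  by rewrite blr_sum; apply: eq_bigr => j _; rewrite blrZ expr2.
have hSS : F S S = \sum_(j < J) (F y (e j)) ^+ 2.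
  rewrite bll_sum; apply: eq_bigr => i _; rewrite bllZ blr_sum.
  rewrite (bigD1 i) //= blrZ horth eqxx mulr1 big1 ?addr0 ?expr2 //.
  move=> j hji; rewrite blrZ horth.
  have -> : (nat_of_ord i == nat_of_ord j) = false.
    by apply/negbTE; rewrite eq_sym.
  by rewrite mulr0.
have := hpsd (y - S); rewrite bllB !blrB hyS hSS (hF.1 S y) hyS.
move=> h; lra.
Qed.


Lemma qf_gram n (vv : 'I_n -> V) (x : 'rV[R]_n) :
  qf (gram F vv) x x = F (\sum_l x ord0 l *: vv l) (\sum_l x ord0 l *: vv l).
Proof.
rewrite /qf mxE bll_sum.
under eq_bigr => j _ do rewrite !mxE mulr_suml.
rewrite exchange_big; apply: eq_bigr => l _.
rewrite bllZ blr_sum mulr_sumr; apply: eq_bigr => j _.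
by rewrite blrZ !mxE; ring.
Qed.

End BL.

Lemma series_eps (R : realType) (u : nat -> R) (l : R) :
  series u @ \oo --> l -> forall e : R, 0 < e ->
  exists J : nat, `|l - \sum_(0 <= k < J) u k| < e.
Proof.
move=> h e he; move/cvgrPdist_lt : h => /(_ e he) [J _ HJ].
exists J; have := HJ J (leqnn J). by rewrite /series /=.
Qed.

Lemma choose_s (R : realType) (rho t c : R) : 0 < rho -> 0 < t ->
  c < rho - rho / (1 + t) ->
  exists s, [/\ 0 <= s, s < t & (1 + s) * c <= s * rho].
Proof.
move=> hr ht hc.
set q := rho / (1 + t).
have hq : 0 < q by rewrite /q divr_gt0 // ltr_pwDr.
have hrq : rho = q * (1 + t) by rewrite /q divfK // gt_eqF // ltr_pwDr.
have hc2 : c < q * t by rewrite -/q in hc; nra.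
case: (lerP c 0) => hc0.
  by exists 0; split => //; lra.
have hD : 0 < rho - c by nra.
exists (c / (rho - c)).
have hsD : c / (rho - c) * (rho - c) = c by rewrite divfK // gt_eqF.
have hs0 : 0 <= c / (rho - c) by apply: divr_ge0; lra.
split => //.
  rewrite ltNge; apply/negP => hts.
  have := ler_wpM2r (ltW hD) hts; rewrite hsD => h; nra.
set s := c / (rho - c) in hsD hs0 *; nra.
Qed.

Lemma term_nonneg (R : realType) (l r s c x : R) :
  0 < r -> 0 <= s -> ((l <= c /\ c < r /\ (1 + s) * c <= s * r) \/ x = 0 \/ r <= l) ->
  0 <= x ^+ 2 * ((l - r) * ((1 + s) * l - s * r)).
Proof.
move=> hr hs [[hl [hc hsc]]|[->|hl]].
- apply: mulr_ge0; first exact: sqr_ge0.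
  apply: mulr_le0; first lra.
  have : (1 + s) * l <= (1 + s) * c by apply: ler_wpM2l => //; lra.
  lra.
- by rewrite expr2 !mul0r lexx.
- apply: mulr_ge0; first exact: sqr_ge0.
  apply: mulr_ge0; first lra.
  have : 0 <= s * (l - r) by apply: mulr_ge0 => //; lra.
  lra.
Qed.

Unset Implicit Arguments.
Section AN.
Variables (R : realType) (D : lmodType R) (M N : D -> D -> R).
Hypotheses (hM : sym_bilinear M) (hN : sym_bilinear N) (hMpd : form_posdef M).
Variables (lam : nat -> R) (phi : nat -> D).
Hypotheses (hlam_mono : forall i j : nat, (i <= j)%N -> lam i <= lam j)
  (heig : forall (i : nat) (v : D), M (phi i) v = lam i * N (phi i) v)
  (horth : forall i j : nat, M (phi i) (phi j) = (i == j)%:R)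
  (hexp : forall v : D,
      series (fun i => lam i * (N v (phi i)) ^+ 2) @ \oo --> N v v).
Variables (X : lmodType R) (bG : X -> X -> R).
Hypotheses (hbG : sym_bilinear bG) (hbGpsd : form_possemidef bG).
Variables (T : D -> X).
Hypothesis (hTM : forall u v : D, bG (T u) (T v) = M u v).
Variables (rho : R).
Hypothesis (hrho : 0 < rho).

Lemma Mpsd : form_possemidef M.
Proof.
move=> v; case: (eqVneq v 0) => [->|hv]; last by apply: ltW; apply: hMpd.
by rewrite blr0.
Qed.

Lemma AN (u : D) (wz : X) (a : R) (m k0 : nat) :
  (forall j, bG wz (T (phi j)) = N u (phi j)) ->
  0 < bG (T u - rho *: wz) (T u - rho *: wz) ->
  a < 0 ->
  M u u - rho * N u u <= a * bG (T u - rho *: wz) (T u - rho *: wz) ->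
  (k0 < m)%N -> rho <= lam m ->
  (forall j, (m - k0 <= j < m)%N -> N u (phi j) = 0) ->
  rho - rho / (1 - a) <= lam (m - k0.+1).
Proof.
move=> hwz hb ha hE hk hrm hcon.
set b := bG (T u - rho *: wz) (T u - rho *: wz) in hb hE.
rewrite leNgt; apply/negP => hc.
set c := lam (m - k0.+1) in hc.
set t := - a.
have ht : 0 < t by rewrite /t oppr_gt0.
have h1a : 1 - a = 1 + t by rewrite /t.
rewrite h1a in hc.
have [s [hs0 hst hsc]] := choose_s hrho ht hc.
have hcr : c < rho.
  apply: lt_le_trans hc _; rewrite lerBlDr lerDl; apply: divr_ge0; [exact: ltW hrho | timeout 20 lra].
pose aj j := N u (phi j).
have hMphi : forall j, M u (phi j) = lam j * aj j.
  by move=> j; rewrite hM.1 heig hN.1.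
have hbphi : forall j, bG (T u - rho *: wz) (T (phi j)) = (lam j - rho) * aj j.
  move=> j; rewrite (bllB hbG) (bllZ hbG) hTM hwz hMphi /aj; ring.
have eps0 : 0 < (t - s) * b / rho.
  by apply: divr_gt0 => //; apply: mulr_gt0 => //; timeout 20 lra.
have [J hJ] := series_eps (hexp u) eps0.
rewrite big_mkord in hJ.
have hB1 := bessel hM u J Mpsd horth.
have hB2 := bessel hbG (e := fun j => T (phi j)) (T u - rho *: wz) J hbGpsd
  (fun i j => etrans (hTM _ _) (horth i j)).
have hterm : forall j : 'I_J,
   0 <= (M u (phi j)) ^+ 2 + s * (bG (T u - rho *: wz) (T (phi j))) ^+ 2
        - rho * (lam j * (N u (phi j)) ^+ 2).
  move=> j; rewrite hbphi hMphi -/(aj j).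
  have -> : (lam j * aj j) ^+ 2 + s * ((lam j - rho) * aj j) ^+ 2 -
              rho * (lam j * aj j ^+ 2) =
            aj j ^+ 2 * ((lam j - rho) * ((1 + s) * lam j - s * rho)) by ring.
  apply: (term_nonneg (c := c)) => //.
  case: (ltnP j (m - k0)) => hj1.
    left; split => //; rewrite /c; apply: hlam_mono.
    by rewrite subnS -ltnS prednK ?subn_gt0.
  case: (ltnP j m) => hj2.
    by right; left; apply: hcon; rewrite hj1 hj2.
  by right; right; apply: le_trans hrm (hlam_mono _ _ hj2).
have hsum : 0 <= \sum_(j < J) ((M u (phi j)) ^+ 2 + s * (bG (T u - rho *: wz) (T (phi j))) ^+ 2
        - rho * (lam j * (N u (phi j)) ^+ 2)).
  by apply: sumr_ge0 => j _; exact: hterm j.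
rewrite sumrB big_split /= -mulr_sumr -mulr_sumr in hsum.
set SM := \sum_(i < J) M u (phi i) ^+ 2 in hsum hB1.
set SB := \sum_(i < J) bG (T u - rho *: wz) (T (phi i)) ^+ 2 in hsum hB2.
set SN := \sum_(i < J) lam i * N u (phi i) ^+ 2 in hsum hJ.
have hJ2 : N u u - SN < (t - s) * b / rho by apply: le_lt_trans (ler_norm _) hJ.
have hJ3 : rho * (N u u - SN) < (t - s) * b.
  by rewrite mulrC -ltr_pdivlMr.
have hsb : s * SB <= s * b by apply: ler_wpM2l.
have : a * b = - (t * b) by rewrite /t mulNr opprK.
move=> hab.
timeout 20 lra.
Qed.

End AN.

Unset Implicit Arguments.

Theorem theorem4p4
  (R : realType)
  (* (A1) *)
  (D : lmodType R) (M N : D -> D -> R)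
  (hM : sym_bilinear M) (hN : sym_bilinear N) (hMpd : form_posdef M)
  (* (A2) ; 0-based: lam i, phi i stand for lambda_{i+1}, phi_{i+1} *)
  (lam : nat -> R) (phi : nat -> D)
  (hlam_mono : forall i j : nat, (i <= j)%N -> lam i <= lam j)
  (heig : forall (i : nat) (v : D), M (phi i) v = lam i * N (phi i) v)
  (horth : forall i j : nat, M (phi i) (phi j) = (i == j)%:R)
  (hexp : forall v : D,
      series (fun i => lam i * (N v (phi i)) ^+ 2) @ \oo --> N v v)
  (* (A3) *)
  (X : lmodType R) (bG : X -> X -> R)
  (hbG : sym_bilinear bG) (hbGpsd : form_possemidef bG)
  (T : D -> X) (hT : linear_map T)
  (hTM : forall u v : D, bG (T u) (T v) = M u v)
  (* (A4) *)
  (n : nat) (v : 'I_n -> D) (w : 'I_n -> X)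
  (hw : forall (i : 'I_n) (u : D), bG (w i) (T u) = N (v i) u)
  (* (A5) *)
  (rho : R) (hrho : 0 < rho)
  (hB : mx_posdef (gram M v - (2 * rho) *: gram N v + (rho ^+ 2) *: gram bG w))
  (nu : 'I_n -> R)
  (hnu : gen_eigenvalues_sorted (gram M v - rho *: gram N v)
            (gram M v - (2 * rho) *: gram N v + (rho ^+ 2) *: gram bG w) nu)
  (q : nat) (hq : q = #|[pred k : 'I_n | nu k < 0]|)
  (* extra hypothesis *)
  (m : nat) (hmn : (n <= m)%N) (hrhom : rho <= lam m) :
  (* lambda_{m+1-k} >= rho - rho/(1 - nu_k) for 1 <= k <= q  (k0 = k - 1) *)
  (forall k0 : 'I_n, (k0 < q)%N ->
      rho - rho / (1 - nu k0) <= lam (m - k0.+1)%N) /\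
  (* "in particular" part *)
  (mx_posdef (gram N v) ->
   forall Lam : 'I_n -> R,
     gen_eigenvalues_sorted (gram M v) (gram N v) Lam ->
     (forall i : 'I_n, Lam i < rho) ->
     (forall k : 'I_n, nu k < 0) /\ q = n /\
     (forall k0 : 'I_n, rho - rho / (1 - nu k0) <= lam (m - k0.+1)%N)).
Proof.
case: n v w hw hB nu hnu hq hmn => [|n'] v w hw hB nu hnu hq hmn.
  split; first by case.
  move=> _ Lam _ _; split; first by case.
  split; last by case.
  rewrite hq; apply/eqP; rewrite -leqn0.
  by have := max_card [pred k : 'I_0 | nu k < 0]; rewrite card_ord.
have symG : forall (V : lmodType R) (F : V -> V -> R) (vv : 'I_n'.+1 -> V),
    sym_bilinear F -> (gram F vv)^T = gram F vv.
  by move=> V F vv hF; apply/matrixP => i j; rewrite !mxE hF.1.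
have pdrP : forall P : 'M[R]_n'.+1, mx_posdef P -> pdr P.
  move=> P hP y yn0; have := hP.2 (y^T); rewrite trmxK; apply.
  by rewrite trmx_eq0.
set A := gram M v - rho *: gram N v.
set Bm := gram M v - (2 * rho) *: gram N v + rho ^+ 2 *: gram bG w.
have hAT : A^T = A.
  by apply/matrixP => i j; rewrite !mxE hM.1 (hN.1 (v j)).
have hBT : Bm^T = Bm.
  by apply/matrixP => i j; rewrite !mxE hM.1 (hN.1 (v j)) (hbG.1 (w j)).
have pBm : pdr Bm by apply: pdrP.
have hchiB : char_poly (invmx Bm *m A) = \prod_(i < n'.+1) ('X - (nu i)%:P).
  exact: hnu.1.
have hmono := hnu.2.
pose u (x : 'rV[R]_n'.+1) := \sum_l x ord0 l *: v l.
pose wz (x : 'rV[R]_n'.+1) := \sum_l x ord0 l *: w l.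
have hwzphi : forall x j, bG (wz x) (T (phi j)) = N (u x) (phi j).
  move=> x j; rewrite (bll_sum hbG) (bll_sum hN); apply: eq_bigr => l _.
  by rewrite (bllZ hbG) (bllZ hN) hw.
have hwzu : forall x, bG (wz x) (T (u x)) = N (u x) (u x).
  move=> x; rewrite (bll_sum hbG) (bll_sum hN); apply: eq_bigr => l _.
  by rewrite (bllZ hbG) (bllZ hN) hw.
have hqA : forall x, qf A x x = M (u x) (u x) - rho * N (u x) (u x).
  by move=> x; rewrite qf_matB (qf_gram hM) (qf_gram hN).
have hqB : forall x, qf Bm x x = bG (T (u x) - rho *: wz x) (T (u x) - rho *: wz x).
  move=> x; rewrite qf_addM qf_subM !qf_scaleM (qf_gram hM) (qf_gram hN) (qf_gram hbG).
  rewrite -/(u x) -/(wz x).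
  rewrite (bllB hbG) !(blrB hbG) !(bllZ hbG) !(blrZ hbG) hTM (hbG.1 (T _) (wz x)) hwzu.
  ring.
have part1 : forall k0 : 'I_n'.+1, (k0 < q)%N ->
    rho - rho / (1 - nu k0) <= lam (m - k0.+1)%N.
  move=> k0 hk0.
  have hnuk : nu k0 < 0.
    rewrite ltNge; apply/negP => hge.
    have : (q <= k0)%N.
      rewrite hq -(card_ord_lt (ltnW (ltn_ord k0))).
      apply: subset_leq_card; apply/fintype.subsetP => i; rewrite !inE => hi.
      rewrite ltnNge; apply/negP => hki; have := hmono _ _ hki => h; lra.
    by rewrite leqNgt hk0.
  pose L : 'M[R]_(n'.+1, k0) := \matrix_(l, j) N (v l) (phi (m - k0 + j)%N).
  have [x [xn0 hxL hxq]] :=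
    @LA1 R n' A Bm nu k0 k0 L hAT hBT pBm hchiB hmono (leqnn k0).
  have hcon : forall j, (m - k0 <= j < m)%N -> N (u x) (phi j) = 0.
    move=> j /andP [hj1 hj2].
    have hj' : (j - (m - k0) < k0)%N by lia.
    have := congr1 (fun Z : 'M[R]_(1, k0) => Z ord0 (Ordinal hj')) hxL.
    rewrite [in RHS]mxE /= => h.
    have -> : j = (m - k0 + (j - (m - k0)))%N by rewrite subnKC.
    rewrite (bll_sum hN) -[RHS]h mxE; apply: eq_bigr => l _; rewrite (bllZ hN) mxE.
    by [].
  have hb : 0 < bG (T (u x) - rho *: wz x) (T (u x) - rho *: wz x).
    by rewrite -hqB; apply: pBm.
  apply: (AN R D M N hM hN hMpd lam phi hlam_mono heig horth hexp X bG hbG hbGpsd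
            T hTM rho hrho (u x) (wz x) (nu k0) m k0 (hwzphi x) hb hnuk _ _ hrhom hcon).
    by rewrite -hqA -hqB.
  exact: leq_trans (ltn_ord k0) hmn.
split; first exact: part1.
move=> hA1 Lam hLam hLr.
have pA1 : pdr (gram N v) by apply: pdrP.
have hneg : forall x : 'rV[R]_n'.+1, x != 0 -> qf A x x < 0.
  exact: (@LA2 R n' (gram M v) (gram N v) Lam rho (symG _ _ _ hM) (symG _ _ _ hN)
            pA1 hLam.1 hLr).
have hall : forall k, nu k < 0 := @LA3 R n'.+1 A Bm nu hBT pBm hneg hchiB.
have hqn : q = n'.+1.
  rewrite hq -[RHS](card_ord n'.+1); apply: eq_card => k; rewrite !inE hall.
  by [].
split => //; split => // k0; apply: part1; by rewrite hqn ltn_ord.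
Qed.
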